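(* Let $0\to x_2\to x\to x_1\to0$ be a short exact sequence of finite-dimensional $\Pi$-modules. Suppose that $\operatorname{Ext}^1_\Pi(x_2,x_2)=0$ and $\operatorname{Ext}^1_\Pi(x,x_1)=0$. Then $\operatorname{Ext}^1_\Pi(x_1,x_1)=0$ and $\operatorname{Ext}^1_\Pi(x,x)=0$.
   Context: $K$ is an algebraically closed field, $Q=(I,\Omega)$ a finite quiver without loops, and $\Pi$ its preprojective algebra: the path algebra of the double quiver $\overline Q$ (arrows $\Omega\cup\{h^{op}:h\in\Omega\}$) modulo the ideal generated by $\sum_{h\in\Omega}(hh^{op}-h^{op}h)$. For finite-dimensional $\Pi$-modules one has functorial isomorphisms $\operatorname{Ext}^1_\Pi(N,M)\cong\operatorname{Ext}^1_\Pi(M,N)^*$. *)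

(* Defs.v *)
From HB Require Import structures.
From mathcomp Require Import all_boot all_order all_algebra.
Set Implicit Arguments. Unset Strict Implicit. Unset Printing Implicit Defensive.
Import GRing.Theory.
Local Open Scope ring_scope.

(* The double quiver has arrows
   Om + Om: inl h = h : s h -> t h, inr h = h^op : t h -> s h.
   A finite-dimensional Pi-module is a representation of the double quiver
   satisfying the preprojective relation, encoded on its total space K^n
   (row vectors, maps act on the right) by orthogonal vertex idempotents
   summing to 1 and arrow operators supported between the right vertices. *)
Section Preproj.
Variables (K : fieldType) (I Om : finType) (s t : Om -> I).

Definition dsrc (a : Om + Om) : I :=
  match a with inl h => s h | inr h => t h end.
Definition dtgt (a : Om + Om) : I :=
  match a with inl h => t h | inr h => s h end.

Record pimod := PiMod {
  pdim : nat;
  pidem : I -> 'M[K]_pdim;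
  pact : Om + Om -> 'M[K]_pdim;
  pidem_idem : forall i, pidem i *m pidem i = pidem i;
  pidem_orth : forall i j, i != j -> pidem i *m pidem j = 0;
  pidem_sum : \sum_i pidem i = 1%:M;
  pact_supp : forall a, pidem (dsrc a) *m pact a *m pidem (dtgt a) = pact a;
  pact_rel : \sum_(h : Om) (pact (inl h) *m pact (inr h)
                            - pact (inr h) *m pact (inl h)) = 0 }.

Definition pihom (M N : pimod) (f : 'M[K]_(pdim M, pdim N)) : Prop :=
  (forall i, pidem M i *m f = f *m pidem N i) /\
  (forall a, pact M a *m f = f *m pact N a).

Definition pises (N E M : pimod) (f : 'M[K]_(pdim N, pdim E))
    (g : 'M[K]_(pdim E, pdim M)) : Prop :=
  [/\ pihom f, pihom g, row_free f, row_full g & (f == kermx g)%MS].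

Definition Ext1_zero (M N : pimod) : Prop :=
  forall (E : pimod) (f : 'M[K]_(pdim N, pdim E)) (g : 'M[K]_(pdim E, pdim M)),
    pises f g ->
    exists sg : 'M[K]_(pdim M, pdim E), pihom sg /\ sg *m g = 1%:M.

End Preproj.

(* Main.v *)
From HB Require Import structures.
Require Import Defs.
From mathcomp Require Import all_boot all_order all_algebra.
From mathcomp Require Import ring.
Set Implicit Arguments. Unset Strict Implicit. Unset Printing Implicit Defensive.
Import GRing.Theory.
Local Open Scope ring_scope.

Section Proof.
Variables (K : fieldType) (I Om : finType) (s t : Om -> I).
Local Notation pimod := (@pimod K I Om s t).
Local Notation A := (Om + Om)%type.
Local Notation src := (dsrc s t).
Local Notation tgt := (dtgt s t).
Implicit Types M N : pimod.

Lemma idemE M i j : pidem M i *m pidem M j = if i == j then pidem M i else 0.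
Proof.
case: eqP => [->|/eqP ne]; [exact: pidem_idem | exact: pidem_orth].
Qed.

Lemma pact_l M a : pidem M (src a) *m pact M a = pact M a.
Proof. by rewrite -{1}(pact_supp M a) !mulmxA pidem_idem pact_supp. Qed.

Lemma pact_r M a : pact M a *m pidem M (tgt a) = pact M a.
Proof. by rewrite -{1}(pact_supp M a) -!mulmxA pidem_idem !mulmxA pact_supp. Qed.

Definition graded M N (X : 'M[K]_(pdim M, pdim N)) :=
  forall i, pidem M i *m X = X *m pidem N i.

Definition pi0 M N (X : 'M[K]_(pdim M, pdim N)) :=
  \sum_i pidem M i *m X *m pidem N i.

Lemma sandwich M N j (X : 'M[K]_(pdim M, pdim N)) :
  pidem M j *m X = X -> X *m pidem N j = X -> pi0 X = X.
Proof.
move=> hl hr; rewrite /pi0 (bigD1 j) //= big1 ?addr0.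
  by rewrite hl hr.
move=> i ne; rewrite -hl !mulmxA idemE (negbTE ne).
by rewrite !mul0mx.
Qed.

Lemma pi0_graded M N (X : 'M[K]_(pdim M, pdim N)) : graded (pi0 X).
Proof.
move=> j; rewrite /pi0 mulmx_sumr mulmx_suml; apply: eq_bigr => i _.
rewrite !mulmxA idemE -!mulmxA idemE.
case: (eqVneq j i) => [->|ne]; rewrite ?eqxx //.
by rewrite mul0mx !mulmx0.
Qed.

Lemma graded_pi0 M N (X : 'M[K]_(pdim M, pdim N)) : graded X -> pi0 X = X.
Proof.
move=> gX; rewrite /pi0; under eq_bigr do rewrite -mulmxA -gX mulmxA pidem_idem.
by rewrite -mulmx_suml pidem_sum mul1mx.
Qed.

Lemma pi0D M N (X Y : 'M[K]_(pdim M, pdim N)) : pi0 (X + Y) = pi0 X + pi0 Y.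
Proof. by rewrite /pi0 -big_split; apply: eq_bigr => i _; rewrite mulmxDr mulmxDl. Qed.
Lemma pi0N M N (X : 'M[K]_(pdim M, pdim N)) : pi0 (- X) = - pi0 X.
Proof. by rewrite /pi0 -sumrN; apply: eq_bigr => i _; rewrite mulmxN mulNmx. Qed.
Lemma pi0B M N (X Y : 'M[K]_(pdim M, pdim N)) : pi0 (X - Y) = pi0 X - pi0 Y.
Proof. by rewrite pi0D pi0N. Qed.
Lemma pi0_sum M N (F : Om -> 'M[K]_(pdim M, pdim N)) :
  pi0 (\sum_h F h) = \sum_h pi0 (F h).
Proof.
rewrite /pi0 exchange_big /=; apply: eq_bigr => i _.
by rewrite mulmx_sumr mulmx_suml.
Qed.

Definition C1 M N (Z : A -> 'M[K]_(pdim M, pdim N)) :=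
  forall a, pidem M (src a) *m Z a *m pidem N (tgt a) = Z a.

Lemma C1_l M N (Z : A -> 'M[K]_(pdim M, pdim N)) a : C1 Z -> pidem M (src a) *m Z a = Z a.
Proof. by move=> h; rewrite -{1}(h a) !mulmxA pidem_idem h. Qed.
Lemma C1_r M N (Z : A -> 'M[K]_(pdim M, pdim N)) a : C1 Z -> Z a *m pidem N (tgt a) = Z a.
Proof. by move=> h; rewrite -{1}(h a) -!mulmxA pidem_idem !mulmxA h. Qed.

Definition d0 M N (X : 'M[K]_(pdim M, pdim N)) : A -> 'M[K]_(pdim M, pdim N) :=
  fun a => pact M a *m X - X *m pact N a.

Definition d1 M N (Z : A -> 'M[K]_(pdim M, pdim N)) : 'M[K]_(pdim M, pdim N) :=
  \sum_h (pact M (inl h) *m Z (inr h) + Z (inl h) *m pact N (inr h)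
          - pact M (inr h) *m Z (inl h) - Z (inr h) *m pact N (inl h)).

Lemma zmod_id (V : zmodType) (P Q R S T U : V) :
  (P - Q) + (Q - R) - (S - T) - (T - U) = (P - S) - (R - U).
Proof.
rewrite addrA subrK -addrA -opprD addrA subrK opprB opprD opprK.
by rewrite addrACA [- R + U]addrC.
Qed.

Lemma d1d0 M N (X : 'M[K]_(pdim M, pdim N)) : d1 (d0 X) = 0.
Proof.
rewrite /d1 /d0.
transitivity ((\sum_h (pact M (inl h) *m pact M (inr h) - pact M (inr h) *m pact M (inl h))) *m X
   - X *m (\sum_h (pact N (inl h) *m pact N (inr h) - pact N (inr h) *m pact N (inl h)))).
  rewrite mulmx_suml mulmx_sumr -sumrB; apply: eq_bigr => h _.
  rewrite !mulmxBr !mulmxBl !mulmxA.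
  exact: zmod_id.
by rewrite !pact_rel mul0mx mulmx0 subrr.
Qed.

Lemma d0_C1 M N (X : 'M[K]_(pdim M, pdim N)) : graded X -> C1 (d0 X).
Proof.
move=> gX a; rewrite /d0.
have h1 : pidem M (src a) *m (pact M a *m X) *m pidem N (tgt a) = pact M a *m X.
  by rewrite !mulmxA pact_l -mulmxA -gX mulmxA pact_r.
have h2 : pidem M (src a) *m (X *m pact N a) *m pidem N (tgt a) = X *m pact N a.
  by rewrite !mulmxA gX -(mulmxA X) pact_l -mulmxA pact_r.
by rewrite mulmxBr mulmxBl h1 h2.
Qed.

Lemma tr_sum n (J : finType) (F : J -> 'M[K]_n) : \tr (\sum_j F j) = \sum_j \tr (F j).
Proof. exact: raddf_sum. Qed.

Lemma trN n (X : 'M[K]_n) : \tr (- X) = - \tr X.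
Proof. exact: raddfN. Qed.

Lemma d1_graded M N (Z : A -> 'M[K]_(pdim M, pdim N)) : C1 Z -> pi0 (d1 Z) = d1 Z.
Proof.
move=> hZ; rewrite /d1 pi0_sum; apply: eq_bigr => h _.
rewrite !pi0B pi0D.
congr (_ + _ - _ - _).
- apply: (@sandwich M N (s h)).
    by rewrite mulmxA (pact_l M (inl h)).
  by rewrite -mulmxA (C1_r (inr h) hZ).
- apply: (@sandwich M N (s h)).
    by rewrite mulmxA (C1_l (inl h) hZ).
  by rewrite -mulmxA (pact_r N (inr h)).
- apply: (@sandwich M N (t h)).
    by rewrite mulmxA (pact_l M (inr h)).
  by rewrite -mulmxA (C1_r (inl h) hZ).
- apply: (@sandwich M N (t h)).
    by rewrite mulmxA (C1_l (inr h) hZ).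
  by rewrite -mulmxA (pact_r N (inl h)).
Qed.

Definition pair M N (Z : A -> 'M[K]_(pdim M, pdim N)) (W : A -> 'M[K]_(pdim N, pdim M)) : K :=
  \sum_h (\tr (Z (inl h) *m W (inr h)) - \tr (Z (inr h) *m W (inl h))).

Lemma pair_anti M N (Z : A -> 'M[K]_(pdim M, pdim N)) (W : A -> 'M[K]_(pdim N, pdim M)) :
  pair Z W = - pair W Z.
Proof.
rewrite /pair -sumrN; apply: eq_bigr => h _.
by rewrite opprB (mxtrace_mulC (W (inr h))) (mxtrace_mulC (W (inl h))).
Qed.

Lemma pair_d0 M N (X : 'M[K]_(pdim M, pdim N)) (W : A -> 'M[K]_(pdim N, pdim M)) :
  pair (d0 X) W = - \tr (X *m d1 W).
Proof.
rewrite /pair /d0 /d1 mulmx_sumr tr_sum -sumrN; apply: eq_bigr => h _.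
rewrite !mulmxBl !(mulmxDr, mulmxN) !(mxtraceD, trN).
rewrite -!mulmxA (mxtrace_mulC (pact M (inl h))) (mxtrace_mulC (pact M (inr h))).
rewrite -!mulmxA.
ring.
Qed.

Definition pi1 M N (Z : A -> 'M[K]_(pdim M, pdim N)) : A -> 'M[K]_(pdim M, pdim N) :=
  fun a => pidem M (src a) *m Z a *m pidem N (tgt a).

Lemma pi1_C1 M N (Z : A -> 'M[K]_(pdim M, pdim N)) : C1 (pi1 Z).
Proof. by move=> a; rewrite /pi1 !mulmxA pidem_idem -!mulmxA pidem_idem. Qed.

Lemma pair_pi1 M N (Z : A -> 'M[K]_(pdim M, pdim N)) (W : A -> 'M[K]_(pdim N, pdim M)) :
  pair (pi1 Z) W = pair Z (pi1 W).
Proof.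
rewrite /pair /pi1; apply: eq_bigr => h _ /=.
by congr (_ - _); rewrite -!mulmxA mxtrace_mulC -!mulmxA.
Qed.

Lemma pair_C1 M N (Z : A -> 'M[K]_(pdim M, pdim N)) (W : A -> 'M[K]_(pdim N, pdim M)) :
  C1 Z -> pair Z W = pair Z (pi1 W).
Proof.
move=> hZ; rewrite -pair_pi1 /pair; apply: eq_bigr => h _.
by rewrite /pi1 (hZ (inl h)) (hZ (inr h)).
Qed.

Lemma tr_nondeg M N (Y : 'M[K]_(pdim N, pdim M)) : pi0 Y = Y ->
  (forall X : 'M[K]_(pdim M, pdim N), graded X -> \tr (X *m Y) = 0) -> Y = 0.
Proof.
move=> hY h.
have h' X : \tr (X *m Y) = 0.
  rewrite -hY -(h (pi0 X) (pi0_graded X)) /pi0 mulmx_suml mulmx_sumr !tr_sum.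
  apply: eq_bigr => i _.
  by rewrite -!mulmxA [in RHS]mxtrace_mulC -!mulmxA.
apply/matrixP => i j; rewrite mxE -(h' (delta_mx j i)).
rewrite /mxtrace (bigD1 j) //= big1 ?addr0 => [|k nk].
  rewrite mxE (bigD1 i) //= big1 ?addr0 => [|l nl].
    by rewrite !mxE !eqxx mul1r.
  by rewrite !mxE eqxx (negbTE nl) mul0r.
rewrite mxE big1 // => l _.
by rewrite !mxE (negbTE nk) mul0r.
Qed.

Definition hom_act M M' (al : 'M[K]_(pdim M', pdim M)) :=
  forall a, pact M' a *m al = al *m pact M a.
Definition hom_idem M M' (al : 'M[K]_(pdim M', pdim M)) :=
  forall i, pidem M' i *m al = al *m pidem M i.

Definition famor M' M N N' (al : 'M[K]_(pdim M', pdim M)) (be : 'M[K]_(pdim N, pdim N'))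
  (Z : A -> 'M[K]_(pdim M, pdim N)) : A -> 'M[K]_(pdim M', pdim N') :=
  fun a => al *m Z a *m be.

Lemma d1_mor M' M N N' (al : 'M[K]_(pdim M', pdim M)) (be : 'M[K]_(pdim N, pdim N')) Z :
  hom_act al -> hom_act be -> d1 (famor al be Z) = al *m d1 Z *m be.
Proof.
move=> ha hb; rewrite /d1 /famor mulmx_sumr mulmx_suml; apply: eq_bigr => h _.
rewrite -!mulmxA -!hb !mulmxA !ha.
by rewrite !(mulmxDr, mulmxN, mulmxDl, mulNmx) !mulmxA.
Qed.

Lemma C1_mor M' M N N' (al : 'M[K]_(pdim M', pdim M)) (be : 'M[K]_(pdim N, pdim N')) Z :
  hom_idem al -> hom_idem be -> C1 Z -> C1 (famor al be Z).
Proof.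
move=> ha hb hZ a; rewrite /famor -!mulmxA -hb !mulmxA ha.
by rewrite -[in RHS](hZ a) !mulmxA.
Qed.

Lemma d0_mor M' M N N' (al : 'M[K]_(pdim M', pdim M)) (be : 'M[K]_(pdim N, pdim N')) X a :
  hom_act al -> hom_act be -> d0 (al *m X *m be) a = al *m d0 X a *m be.
Proof.
move=> ha hb; rewrite /d0 mulmxBr mulmxBl.
by rewrite -!mulmxA -!hb !mulmxA !ha.
Qed.

Lemma graded_mor M' M N N' (al : 'M[K]_(pdim M', pdim M)) (be : 'M[K]_(pdim N, pdim N')) X :
  hom_idem al -> hom_idem be -> graded X -> graded (al *m X *m be).
Proof.
move=> ha hb hX i; rewrite !mulmxA ha -!mulmxA -hb.
by rewrite (mulmxA (pidem M i)) hX -mulmxA.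
Qed.

Definition famvec M N (Z : A -> 'M[K]_(pdim M, pdim N)) : 'rV[K]_(#|{: A}| * (pdim M * pdim N)) :=
  mxvec (\matrix_(r, k) mxvec (Z (enum_val r)) 0 k).

Lemma famvec_inj M N (Z Z' : A -> 'M[K]_(pdim M, pdim N)) :
  famvec Z = famvec Z' -> forall a, Z a = Z' a.
Proof.
move=> E a; apply/matrixP => i j.
have := congr1 (fun v : 'rV[K]_(#|{: A}| * (pdim M * pdim N)) => v 0 (mxvec_index (enum_rank a) (mxvec_index i j))) E.
by rewrite /famvec /= !mxvecE !mxE !mxvecE enum_rankK.
Qed.

Lemma famvec_ext M N (Z Z' : A -> 'M[K]_(pdim M, pdim N)) :
  (forall a, Z a = Z' a) -> famvec Z = famvec Z'.
Proof.
move=> E; rewrite /famvec; congr mxvec; apply/matrixP => r j; by rewrite !mxE E.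
Qed.

Lemma famvec_lin M N k (Z Z' : A -> 'M[K]_(pdim M, pdim N)) :
  famvec (fun a => k *: Z a + Z' a) = k *: famvec Z + famvec Z'.
Proof.
rewrite /famvec -linearP; congr mxvec; apply/matrixP => r j.
by rewrite !mxE linearP !mxE.
Qed.

Lemma d0_lin M N k (X Y : 'M[K]_(pdim M, pdim N)) a :
  d0 (k *: X + Y) a = k *: d0 X a + d0 Y a.
Proof.
rewrite /d0 mulmxDr mulmxDl -scalemxAr -scalemxAl scalerBr.
by rewrite opprD addrACA.
Qed.

Lemma pi0_lin M N k (X Y : 'M[K]_(pdim M, pdim N)) :
  pi0 (k *: X + Y) = k *: pi0 X + pi0 Y.
Proof.
rewrite pi0D; congr (_ + _); rewrite /pi0 scaler_sumr; apply: eq_bigr => i _.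
by rewrite scalemxAl scalemxAr.
Qed.

Definition Wc M N (c : 'cV[K]_(#|{: A}| * (pdim M * pdim N))) (a : A) : 'M[K]_(pdim M, pdim N) :=
  \matrix_(i, j) c (mxvec_index (enum_rank a) (mxvec_index i j)) 0.

Definition Tinv M N (c : 'cV[K]_(#|{: A}| * (pdim M * pdim N))) (a : A) : 'M[K]_(pdim N, pdim M) :=
  match a with inl h => - (Wc c (inr h))^T | inr h => (Wc c (inl h))^T end.

Lemma tr_dot m n (X Y : 'M[K]_(m, n)) : \tr (X *m Y^T) = \sum_i \sum_j X i j * Y i j.
Proof. by apply: eq_bigr => i _; rewrite mxE; apply: eq_bigr => j _; rewrite mxE. Qed.

Lemma mxvec_mul m n (X : 'M[K]_(m, n)) (c : 'cV[K]_(m * n)) :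
  (mxvec X *m c) 0 0 = \sum_i \sum_j X i j * c (mxvec_index i j) 0.
Proof.
rewrite mxE (reindex _ (curry_mxvec_bij _ _)) /= pair_bigA.
by apply: eq_bigr => [[i j]] _ /=; rewrite mxvecE.
Qed.

Lemma pair_Tinv M N (Z : A -> 'M[K]_(pdim M, pdim N)) c :
  pair Z (Tinv c) = (famvec Z *m c) 0 0.
Proof.
transitivity (\sum_a \tr (Z a *m (Wc c a)^T)).
  rewrite big_sumType /= /pair -big_split; apply: eq_bigr => h _ /=.
  by rewrite mulmxN trN opprK.
rewrite mxvec_mul.
rewrite [RHS](reindex enum_rank) /=; last by exists enum_val => x _; rewrite ?enum_rankK ?enum_valK.
apply: eq_bigr => a _; rewrite tr_dot.
rewrite [RHS](reindex _ (curry_mxvec_bij _ _)) /= pair_bigA.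
by apply: eq_bigr => [[i j]] _ /=; rewrite !mxE mxvecE enum_rankK.
Qed.

Section Lin.
Variables M N : pimod.
Definition Gmap (v : 'rV[K]_(pdim M * pdim N)) : 'rV[K]_(#|{: A}| * (pdim M * pdim N)) :=
  famvec (d0 (pi0 (vec_mx v))).
Fact Gmap_lin : linear Gmap.
Proof.
move=> k u v; rewrite /Gmap linearP pi0_lin.
by rewrite (famvec_ext (d0_lin _ _ _)) famvec_lin.
Qed.
HB.instance Definition _ := GRing.isLinear.Build K _ _ *:%R Gmap Gmap_lin.

Lemma nondeg (Z : A -> 'M[K]_(pdim M, pdim N)) : C1 Z ->
  (forall W : A -> 'M[K]_(pdim N, pdim M), C1 W -> d1 W = 0 -> pair Z W = 0) ->
  exists X, graded X /\ forall a, Z a = d0 X a.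
Proof.
move=> hZ hW.
pose B := lin1_mx Gmap.
have key (c : 'cV[K]_(#|{: A}| * (pdim M * pdim N))) : B *m c = 0 -> (famvec Z *m c) 0 0 = 0.
  move=> Bc; rewrite -pair_Tinv (pair_C1 _ hZ); apply: hW; first exact: pi1_C1.
  apply: (@tr_nondeg M N); first exact: d1_graded (pi1_C1 _).
  move=> X gX.
  have : pair (d0 X) (pi1 (Tinv c)) = 0.
    rewrite -(pair_C1 _ (d0_C1 gX)) pair_Tinv.
    have -> : famvec (d0 X) = mxvec X *m B.
      by rewrite mul_rV_lin1 /= /Gmap mxvecK graded_pi0.
    by rewrite -mulmxA Bc mulmx0 mxE.
  by rewrite pair_d0 => /eqP; rewrite oppr_eq0 => /eqP.
have : (famvec Z <= B)%MS.
  rewrite submxE; apply/eqP/rowP => j; rewrite [RHS]mxE.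
  have -> : (famvec Z *m cokermx B) 0 j = (famvec Z *m (cokermx B *m delta_mx j (0 : 'I_1))) 0 0.
by rewrite mulmxA -colE /col mxE.
  by apply: key; rewrite mulmxA mulmx_coker mul0mx.
case/submxP => v hv.
exists (pi0 (vec_mx v)); split; first exact: pi0_graded.
by move: hv; rewrite mul_rV_lin1 /= /Gmap => /famvec_inj.
Qed.
End Lin.

Lemma d1_ext M N (Z Z' : A -> 'M[K]_(pdim M, pdim N)) :
  (forall a, Z a = Z' a) -> d1 Z = d1 Z'.
Proof. by move=> E; rewrite /d1; apply: eq_bigr => h _; rewrite !E. Qed.

Lemma pair_ext M N (Z Z' : A -> 'M[K]_(pdim M, pdim N)) (W W' : A -> 'M[K]_(pdim N, pdim M)) :
  (forall a, Z a = Z' a) -> (forall a, W a = W' a) -> pair Z W = pair Z' W'.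
Proof. by move=> E E'; rewrite /pair; apply: eq_bigr => h _; rewrite !E !E'. Qed.

Lemma hom_act1 M : hom_act (1%:M : 'M[K]_(pdim M)).
Proof. by move=> a; rewrite mulmx1 mul1mx. Qed.
Lemma hom_idem1 M : hom_idem (1%:M : 'M[K]_(pdim M)).
Proof. by move=> a; rewrite mulmx1 mul1mx. Qed.

Lemma pises_fg (N E M : pimod) (f : 'M[K]_(pdim N, pdim E)) (g : 'M[K]_(pdim E, pdim M)) :
  pises f g -> f *m g = 0.
Proof. by case=> _ _ _ _ /eqmxP hfk; apply/sub_kermxP; rewrite -hfk. Qed.

Lemma lift (N E Mm M : pimod) (f : 'M[K]_(pdim N, pdim E)) (g : 'M[K]_(pdim E, pdim Mm))
  (Y : A -> 'M[K]_(pdim M, pdim E)) :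
  pises f g -> C1 Y -> (forall a, Y a *m g = 0) ->
  exists tau : A -> 'M[K]_(pdim M, pdim N),
    [/\ C1 tau, (forall a, tau a *m f = Y a) & (d1 Y = 0 -> d1 tau = 0)].
Proof.
move=> [[hfi hfa] hg rf rg /eqmxP hfk] hY hYg.
have sY a : (Y a <= f)%MS by rewrite hfk; apply/sub_kermxP.
exists (fun a => Y a *m pinvmx f).
have tf a : Y a *m pinvmx f *m f = Y a by rewrite mulmxKpV.
split => //.
- move=> a; apply: (row_free_inj rf) => /=.
  have -> : pidem M (src a) *m (Y a *m pinvmx f) *m pidem N (tgt a) *m f =
    pidem M (src a) *m (Y a *m pinvmx f *m f) *m pidem E (tgt a).
    by rewrite -mulmxA hfi !mulmxA.
  by rewrite !tf hY.
- move=> hd; apply: (row_free_inj rf) => /=; rewrite mul0mx.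
  have := @d1_mor M M N E 1%:M f (fun a => Y a *m pinvmx f) (@hom_act1 M) hfa.
  rewrite mul1mx => <-; rewrite -hd; apply: d1_ext => a.
  by rewrite /famor mul1mx tf.
Qed.

Lemma section (E M : pimod) (g : 'M[K]_(pdim E, pdim M)) :
  pihom g -> row_full g -> exists sg, graded sg /\ sg *m g = 1%:M.
Proof.
move=> [hgi hga] /row_fullP [s0 hs0]; exists (pi0 s0); split; first exact: pi0_graded.
rewrite /pi0 mulmx_suml -pidem_sum; apply: eq_bigr => i _.
by rewrite -mulmxA hgi mulmxA -(mulmxA _ s0) hs0 mulmx1 pidem_idem.
Qed.

Definition H1zero M N := forall Z : A -> 'M[K]_(pdim M, pdim N), C1 Z -> d1 Z = 0 ->
  exists X, graded X /\ forall a, Z a = d0 X a.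

Lemma d0_mulr M N N' (X : 'M[K]_(pdim M, pdim N)) (be : 'M[K]_(pdim N, pdim N')) a :
  hom_act be -> d0 (X *m be) a = d0 X a *m be.
Proof. by move=> hb; rewrite /d0 mulmxBl mulmxA -!mulmxA hb. Qed.

Lemma d0_mull M' M N (al : 'M[K]_(pdim M', pdim M)) (X : 'M[K]_(pdim M, pdim N)) a :
  hom_act al -> d0 (al *m X) a = al *m d0 X a.
Proof. by move=> ha; rewrite /d0 mulmxBr !mulmxA ha. Qed.

Lemma zmod_id2 (V : zmodType) (a b c d : V) : (a - b) - (c - d) = (a - c) - (b - d).
Proof. by rewrite !opprB addrACA [RHS]addrACA; congr (_ + _); rewrite addrC. Qed.

Lemma d0B M N (X Y : 'M[K]_(pdim M, pdim N)) a : d0 (X - Y) a = d0 X a - d0 Y a.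
Proof. by rewrite /d0 mulmxBr mulmxBl zmod_id2. Qed.

Lemma H1_Ext M N : H1zero M N -> Ext1_zero M N.
Proof.
move=> H E f g hses; have hfg := pises_fg hses.
case: (hses) => [[hfi hfa] [hgi hga] rf rg hfk].
have [sg [gs sgg]] := section (conj hgi hga) rg.
have [|tau [ct tf dt]] := @lift N E M M f g (d0 sg) hses (d0_C1 gs).
- move=> a; rewrite /d0 mulmxBl -mulmxA sgg -mulmxA hga mulmxA sgg.
  by rewrite mulmx1 mul1mx subrr.
have [X [gX hX]] := H tau ct (dt (d1d0 sg)).
exists (sg - X *m f); split; last by rewrite mulmxBl sgg -mulmxA hfg mulmx0 subr0.
split.
  move=> i; rewrite mulmxBr mulmxBl gs mulmxA gX -!mulmxA hfi //.
move=> a; apply/eqP; rewrite -subr_eq0; apply/eqP.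
have -> : pact M a *m (sg - X *m f) - (sg - X *m f) *m pact E a = d0 (sg - X *m f) a by [].
by rewrite d0B d0_mulr // -hX tf subrr.
Qed.

Lemma sum_block (J : Type) (r : seq J) m1 m2 n1 n2
  (F1 : J -> 'M[K]_(m1, n1)) (F2 : J -> 'M[K]_(m1, n2)) (F3 : J -> 'M[K]_(m2, n1)) (F4 : J -> 'M[K]_(m2, n2)) :
  \sum_(h <- r) block_mx (F1 h) (F2 h) (F3 h) (F4 h) =
  block_mx (\sum_(h <- r) F1 h) (\sum_(h <- r) F2 h) (\sum_(h <- r) F3 h) (\sum_(h <- r) F4 h).
Proof.
elim: r => [|x r IH]; first by rewrite !big_nil block_mx0.
by rewrite !big_cons IH add_block_mx.
Qed.

Lemma zmod_id3 (V : zmodType) (a b c d : V) : a + b - (c + d) = b + a - d - c.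
Proof. by rewrite opprD [a + b]addrC -[RHS]addrA [- d + _]addrC. Qed.

Section Ext.
Variables (M N : pimod) (Z : A -> 'M[K]_(pdim M, pdim N)).
Hypotheses (hZ : C1 Z) (dZ : d1 Z = 0).

Definition extE_idem (i : I) : 'M[K]_(pdim N + pdim M) := block_mx (pidem N i) 0 0 (pidem M i).
Definition extE_act (a : A) : 'M[K]_(pdim N + pdim M) := block_mx (pact N a) 0 (Z a) (pact M a).

Fact extE_p1 i : extE_idem i *m extE_idem i = extE_idem i.
Proof. by rewrite /extE_idem mulmx_block !mulmx0 !mul0mx !addr0 !add0r !pidem_idem. Qed.

Fact extE_p2 i j : i != j -> extE_idem i *m extE_idem j = 0.
Proof.
move=> ne; rewrite /extE_idem mulmx_block !mulmx0 !mul0mx !addr0 !add0r !pidem_orth //.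
exact: block_mx0.
Qed.

Fact extE_p3 : \sum_i extE_idem i = 1%:M.
Proof.
rewrite /extE_idem sum_block !pidem_sum !big1_eq.
by rewrite [RHS]scalar_mx_block.
Qed.

Fact extE_p4 a : extE_idem (src a) *m extE_act a *m extE_idem (tgt a) = extE_act a.
Proof.
rewrite /extE_idem /extE_act !mulmx_block !mulmx0 !mul0mx !addr0 !add0r.
by rewrite !pact_supp hZ mul0mx.
Qed.

Fact extE_p5 : \sum_h (extE_act (inl h) *m extE_act (inr h) - extE_act (inr h) *m extE_act (inl h)) = 0.
Proof.
rewrite /extE_act.
under eq_bigr do rewrite !mulmx_block !mulmx0 !mul0mx !addr0 !add0r opp_block_mx add_block_mx.
rewrite sum_block !pact_rel subrr big1_eq.
have -> : \sum_h (Z (inl h) *m pact N (inr h) + pact M (inl h) *m Z (inr h)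
      - (Z (inr h) *m pact N (inl h) + pact M (inr h) *m Z (inl h))) = d1 Z.
  by apply: eq_bigr => h _; rewrite zmod_id3.
by rewrite dZ block_mx0.
Qed.

Definition extE : pimod := PiMod extE_p1 extE_p2 extE_p3 extE_p4 extE_p5.

End Ext.

Lemma Ext_H1 M N : Ext1_zero M N -> H1zero M N.
Proof.
move=> Hext Z hZ dZ.
pose E := extE hZ dZ.
pose f : 'M[K]_(pdim N, pdim E) := row_mx 1%:M 0.
pose g : 'M[K]_(pdim E, pdim M) := col_mx 0 1%:M.
have fg : f *m g = 0 by rewrite /f /g mul_row_col mulmx0 mul0mx addr0.
have rf : row_free f.
  by apply/row_freeP; exists (col_mx 1%:M 0); rewrite /f mul_row_col mulmx1 mulmx0 addr0.
have rg : row_full g.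
  by apply/row_fullP; exists (row_mx 0 1%:M); rewrite /g mul_row_col mulmx1 mulmx0 add0r.
have hses : pises f g.
  split => //.
  - split => [i|a] /=; rewrite /f mul_mx_row mulmx1 mulmx0 /=.
      by rewrite /extE_idem mul_row_block ?mulmx0 ?mul1mx ?mul0mx ?addr0.
    by rewrite /extE_act mul_row_block ?mulmx0 ?mul1mx ?mul0mx ?addr0.
  - split => [i|a] /=; rewrite /g [RHS]mul_col_mx mul0mx mul1mx /=.
      by rewrite /extE_idem mul_block_col ?mulmx0 ?mulmx1 ?mul0mx ?addr0 ?add0r.
    by rewrite /extE_act mul_block_col ?mulmx0 ?mulmx1 ?mul0mx ?addr0 ?add0r.
  - have sk : (f <= kermx g)%MS by apply/sub_kermxP.
    rewrite -(mxrank_leqif_eq sk).2 mxrank_ker (eqP rf) (eqP rg) /=.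
    by rewrite addnK.
have [sg [[hsi hsa] hsg]] := Hext E f g hses.
move: sg hsi hsa hsg => /=; rewrite /extE_idem /extE_act => sg hsi hsa hsg.
have hR : rsubmx sg = 1%:M.
  by move: hsg; rewrite /g -{1}[sg]hsubmxK mul_row_col mulmx0 add0r mulmx1.
exists (lsubmx sg); split.
  move=> i; have e := hsi i; rewrite -[sg]hsubmxK mul_mx_row mul_row_block in e.
  by case/eq_row_mx: e => -> _; rewrite mulmx0 addr0.
move=> a; have e := hsa a; rewrite -[sg]hsubmxK mul_mx_row mul_row_block in e.
case/eq_row_mx: e => e _; rewrite /d0 e hR mul1mx.
by rewrite [_ + Z a]addrC addrK.
Qed.

Lemma addBB (V : zmodType) (x y u v : V) : (x - y) + (u - v) = (x + u) - (y + v).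
Proof. by rewrite addrACA -opprD. Qed.

Lemma zmod_id4 (V : zmodType) (a1 a2 b1 b2 c1 c2 d1 d2 : V) :
  (a1 - a2) + (b1 - b2) - (c1 - c2) - (d1 - d2) = (a1 + b1 - c1 - d1) - (a2 + b2 - c2 - d2).
Proof.
rewrite addBB (zmod_id2 (a1 + b1) (a2 + b2) c1 c2).
by rewrite (zmod_id2 (a1 + b1 - c1) (a2 + b2 - c2) d1 d2).
Qed.

Lemma d1B M N (Z W : A -> 'M[K]_(pdim M, pdim N)) :
  d1 (fun a => Z a - W a) = d1 Z - d1 W.
Proof.
rewrite /d1 -sumrB; apply: eq_bigr => h _.
rewrite !mulmxBr !mulmxBl; exact: zmod_id4.
Qed.

Lemma C1B M N (Z W : A -> 'M[K]_(pdim M, pdim N)) :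
  C1 Z -> C1 W -> C1 (fun a => Z a - W a).
Proof. by move=> hZ hW a; rewrite mulmxBr mulmxBl hZ hW. Qed.

Lemma pairBl M N (Z Z' : A -> 'M[K]_(pdim M, pdim N)) (W : A -> 'M[K]_(pdim N, pdim M)) :
  pair (fun a => Z a - Z' a) W = pair Z W - pair Z' W.
Proof.
rewrite /pair -sumrB; apply: eq_bigr => h _.
rewrite !mulmxBl !(mxtraceD, trN); ring.
Qed.

Lemma pairBr M N (Z : A -> 'M[K]_(pdim M, pdim N)) (W W' : A -> 'M[K]_(pdim N, pdim M)) :
  pair Z (fun a => W a - W' a) = pair Z W - pair Z W'.
Proof.
rewrite /pair -sumrB; apply: eq_bigr => h _.
rewrite !mulmxBr !(mxtraceD, trN); ring.
Qed.

Lemma pair_cob_l M N (X : 'M[K]_(pdim M, pdim N)) (W : A -> 'M[K]_(pdim N, pdim M)) :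
  d1 W = 0 -> pair (d0 X) W = 0.
Proof. by move=> dW; rewrite pair_d0 dW mulmx0 mxtrace0 oppr0. Qed.

Lemma pair_cob_r M N (Z : A -> 'M[K]_(pdim M, pdim N)) (X : 'M[K]_(pdim N, pdim M)) :
  d1 Z = 0 -> pair Z (d0 X) = 0.
Proof. by move=> dZ; rewrite pair_anti pair_cob_l // oppr0. Qed.

Lemma pair_reduce M N (Z : A -> 'M[K]_(pdim M, pdim N)) (W : A -> 'M[K]_(pdim N, pdim M)) chi chi' :
  d1 Z = 0 -> d1 W = 0 ->
  pair Z W = pair (fun a => Z a - d0 chi a) (fun a => W a - d0 chi' a).
Proof.
move=> dZ dW.
have dG : d1 (fun a => Z a - d0 chi a) = 0 by rewrite d1B dZ d1d0 subrr.
rewrite pairBr (pair_cob_r _ dG) subr0 pairBl (pair_cob_l _ dW) subr0 //.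
Qed.

Lemma gradedD M N (X Y : 'M[K]_(pdim M, pdim N)) : graded X -> graded Y -> graded (X + Y).
Proof. by move=> gX gY i; rewrite mulmxDr mulmxDl gX gY. Qed.

Lemma d0D M N (X Y : 'M[K]_(pdim M, pdim N)) a : d0 (X + Y) a = d0 X a + d0 Y a.
Proof. by rewrite /d0 mulmxDr mulmxDl opprD addrACA. Qed.

Lemma zmod_id5 (V : zmodType) (x y z : V) : (x - y) - (z - y) = - (z - x).
Proof. by rewrite zmod_id2 subrr subr0 opprB. Qed.

Section Main.
Variables (x2 x x1 : pimod) (f : 'M[K]_(pdim x2, pdim x)) (g : 'M[K]_(pdim x, pdim x1)).
Hypotheses (hses : pises f g) (H22 : H1zero x2 x2) (Hx1 : H1zero x x1).

Lemma main1 : H1zero x1 x1.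
Proof.
have fg := pises_fg hses.
case: (hses) => [[hfi hfa] [hgi hga] rf rg hfk].
have [sg [gs sgg]] := section (conj hgi hga) rg.
have [|eta [ceta tf deta]] := @lift x2 x x1 x1 f g (d0 sg) hses (d0_C1 gs).
  move=> a; rewrite /d0 mulmxBl -mulmxA sgg -mulmxA hga mulmxA sgg.
  by rewrite mulmx1 mul1mx subrr.
have deta' := deta (d1d0 sg).
have dec (Z' : A -> 'M[K]_(pdim x1, pdim x1)) : C1 Z' -> d1 Z' = 0 ->
   exists phi : 'M[K]_(pdim x2, pdim x1), exists chi,
     [/\ hom_act phi, hom_idem phi, graded chi & forall a, Z' a - d0 chi a = eta a *m phi].
  move=> cZ dZ.
  have d1g : d1 (famor g 1%:M Z') = 0.
    by rewrite (d1_mor _ hga (@hom_act1 x1)) dZ mulmx0 mul0mx.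
  have [psi [gpsi hpsi]] := Hx1 (C1_mor hgi (@hom_idem1 x1) cZ) d1g.
  exists (- (f *m psi)), (sg *m psi); split.
  - move=> a; rewrite mulmxN mulNmx; congr (- _); rewrite mulmxA hfa -mulmxA.
    have e : pact x a *m psi = g *m Z' a *m 1%:M + psi *m pact x1 a.
      by rewrite [g *m _ *m _]hpsi /d0 subrK.
    by rewrite e mulmxDr !mulmxA fg !mul0mx add0r.
  - by move=> i; rewrite mulmxN mulNmx mulmxA hfi -mulmxA gpsi mulmxA.
  - by move=> i; rewrite mulmxA gs -mulmxA gpsi mulmxA.
  - move=> a; rewrite mulmxN mulmxA tf.
    have -> : Z' a = sg *m (g *m Z' a *m 1%:M) by rewrite mulmx1 mulmxA sgg mul1mx.
    rewrite [g *m _ *m _]hpsi /d0 !mulmxBr !mulmxBl !mulmxA.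
    exact: zmod_id5.
move=> Z cZ dZ; apply: (nondeg cZ) => W cW dW.
have [phi [chi [hp hpi gchi eZ]]] := dec Z cZ dZ.
have [phi' [chi' [hp' hpi' gchi' eW]]] := dec W cW dW.
rewrite (pair_reduce chi chi' dZ dW).
rewrite (pair_ext (Z' := famor 1%:M phi eta) (W' := famor 1%:M phi' eta)); first last.
- by move=> a; rewrite eW /famor mul1mx.
- by move=> a; rewrite eZ /famor mul1mx.
have -> : pair (famor 1%:M phi eta) (famor 1%:M phi' eta) = pair (famor phi' 1%:M eta) (famor phi 1%:M eta).
  rewrite /pair; apply: eq_bigr => h _; rewrite /famor !mul1mx !mulmx1.
  by congr (_ - _); rewrite !mulmxA mxtrace_mulC !mulmxA.
have d1e : d1 (famor phi' 1%:M eta) = 0.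
  by rewrite (d1_mor _ hp' (@hom_act1 x2)) deta' mulmx0 mul0mx.
have [om [gom hom]] := H22 (C1_mor hpi' (@hom_idem1 x2) ceta) d1e.
rewrite (pair_ext (Z' := d0 om) (W' := famor phi 1%:M eta)) //.
apply: pair_cob_l.
by rewrite d1_mor ?deta' ?mulmx0 ?mul0mx //; exact: hom_act1.
Qed.

Lemma main2 : H1zero x x.
Proof.
have fg := pises_fg hses.
case: (hses) => [[hfi hfa] [hgi hga] rf rg /eqmxP hfk].
have [sg [gs sgg]] := section (conj hgi hga) rg.
have sgg' (p : nat) (B : 'M[K]_(p, pdim x1)) : B *m sg *m g = B by rewrite -mulmxA sgg mulmx1.
pose R := (1%:M - g *m sg) *m pinvmx f.
have Rf : R *m f = 1%:M - g *m sg.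
  rewrite mulmxKpV // hfk; apply/sub_kermxP.
  by rewrite mulmxBl mul1mx sgg' subrr.
have fR : f *m R = 1%:M.
  apply: (row_free_inj rf) => /=; rewrite -mulmxA Rf mul1mx mulmxBr mulmx1 mulmxA fg.
  by rewrite mul0mx subr0.
have gR : graded R.
  move=> i; apply: (row_free_inj rf) => /=.
  rewrite -mulmxA Rf -mulmxA hfi mulmxA Rf mulmxBr mulmxBl mulmx1 mul1mx.
  by rewrite mulmxA hgi -mulmxA gs mulmxA.
have dec (Z' : A -> 'M[K]_(pdim x, pdim x)) : C1 Z' -> d1 Z' = 0 ->
   exists chi, exists kap : A -> 'M[K]_(pdim x1, pdim x2),
     graded chi /\ forall a, Z' a - d0 chi a = g *m kap a *m f.
  move=> cZ dZ.
  have d1g : d1 (famor 1%:M g Z') = 0.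
    by rewrite (d1_mor _ (@hom_act1 x) hga) dZ mulmx0 mul0mx.
  have [psi [gpsi hpsi]] := Hx1 (C1_mor (@hom_idem1 x) hgi cZ) d1g.
  have gchi1 : graded (psi *m sg) by move=> i; rewrite mulmxA gpsi -mulmxA gs mulmxA.
  have [|tau [ctau tf dtau]] := @lift x2 x x1 x f g (fun a => Z' a - d0 (psi *m sg) a) hses
     (C1B cZ (d0_C1 gchi1)).
    move=> a; have hpsi' : Z' a *m g = d0 psi a by rewrite -hpsi /famor mul1mx.
    rewrite mulmxBl hpsi' /d0 mulmxBl !mulmxA sgg'.
    by rewrite -(mulmxA (psi *m sg) (pact x a) g) hga mulmxA sgg' subrr.
  have dY : d1 (fun a => Z' a - d0 (psi *m sg) a) = 0 by rewrite d1B dZ d1d0 subrr.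
  have dtau' := dtau dY.
  have d1t : d1 (famor f 1%:M tau) = 0.
    by rewrite (d1_mor _ hfa (@hom_act1 x2)) dtau' mulmx0 mul0mx.
  have [om [gom hom]] := H22 (C1_mor hfi (@hom_idem1 x2) ctau) d1t.
  exists (psi *m sg + R *m om *m f), (fun a => sg *m (tau a - d0 (R *m om) a)); split.
    by apply: gradedD => //; exact: graded_mor gR hfi gom.
  move=> a.
  have fdR : f *m d0 (R *m om) a = d0 om a by rewrite -d0_mull // mulmxA fR mul1mx.
  have ft : f *m (tau a - d0 (R *m om) a) = 0.
    by rewrite mulmxBr fdR -hom /famor mulmx1 subrr.
  have -> : g *m (sg *m (tau a - d0 (R *m om) a)) = tau a - d0 (R *m om) a.
    rewrite mulmxA -[in RHS](mul1mx (tau a - _)).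
    by rewrite -(subrK (g *m sg) 1%:M) -Rf mulmxDl -(mulmxA R) ft mulmx0 add0r.
  rewrite mulmxBl tf d0D (d0_mulr (R *m om) a hfa).
  by rewrite opprD addrA.
move=> Z cZ dZ; apply: (nondeg cZ) => W cW dW.
have [chi [kap [gchi eZ]]] := dec Z cZ dZ.
have [chi' [kap' [gchi' eW]]] := dec W cW dW.
rewrite (pair_reduce chi chi' dZ dW).
rewrite (pair_ext (Z' := fun a => g *m kap a *m f) (W' := fun a => g *m kap' a *m f)) //.
rewrite /pair big1 // => h _.
by rewrite -!mulmxA !(mulmxA f g) fg !mul0mx !mulmx0 mxtrace0 subrr.
Qed.

End Main.

End Proof.

Theorem lemma8p1 (K : closedFieldType) (I Om : finType) (s t : Om -> I)
  (noloop : forall h : Om, s h != t h)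
  (x2 x x1 : @pimod K I Om s t)
  (f : 'M[K]_(pdim x2, pdim x)) (g : 'M[K]_(pdim x, pdim x1)) :
  pises f g -> Ext1_zero x2 x2 -> Ext1_zero x x1 ->
  Ext1_zero x1 x1 /\ Ext1_zero x x.
Proof.
move=> hses e22 ex1; split; apply: H1_Ext.
  exact: (main1 hses (Ext_H1 e22) (Ext_H1 ex1)).
exact: (main2 hses (Ext_H1 e22) (Ext_H1 ex1)).
Qed.
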